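(* Let $A\in\mathcal{PM}(n)$ have row vectors $r_0,\ldots,r_{n-1}$. A row vector $v\in\{0,1\}^n$ is a poset vector of $A$ if and only if $v=\sum_{i\in S} r_i$ (Boolean sum) for some $S\subseteq X_n$ with $|S|=k\ge 0$ such that the principal submatrix $A[S]$ equals the $k\times k$ identity matrix $I_k$, where the empty sum ($k=0$) is $v=\mathbf{0}$.
   Context: Let $X_n=\{0,1,\ldots,n-1\}$. A naturally labeled (NL) poset on $X_n$ is a partial order $\preceq$ on $X_n$ such that $x\preceq y$ implies $x\le y$ in the usual integer order. Its poset matrix is the $n\times n$ $(0,1)$-matrix $A=(a_{i,j})_{i,j\in X_n}$ with $a_{i,j}=1$ if $j\preceq i$ and $0$ otherwise; $\mathcal{PM}(n)$ is the set of all such matrices. Vectors are over the Boolean algebra $\{0,1\}$ with $0+0=0$, $0+1=1+0=1+1=1$ (entrywise sum). For $v\in\{0,1\}^n$ (a row vector), $A^v=\begin{bmatrix}A&\mathbf{0}\\ v&1\end{bmatrix}$, and $v$ is a poset vector of $A$ if $A^v\in\mathcal{PM}(n+1)$. For $S\subseteq X_n$, $A[S]$ is the principal submatrix of $A$ with rows and columns indexed by $S$. *)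

(* Defs.v *)
(* Matrices over the Boolean algebra {0,1} are 'M[bool]_n
   (entry true = 1, false = 0); row vectors are 'rV[bool]_n. *)
From mathcomp Require Import all_boot all_algebra.
Set Implicit Arguments. Unset Strict Implicit. Unset Printing Implicit Defensive.

(* A is a poset matrix: the relation  j ⪯ i  :=  A i j  is a partial order on
   X_n = 'I_n which is naturally labeled (j ⪯ i implies j <= i). *)
Definition is_poset_matrix (n : nat) (A : 'M[bool]_n) : Prop :=
  [/\ (forall i, A i i),
      (forall i j, A i j -> A j i -> i = j),
      (forall i j k, A i j -> A j k -> A i k)
    & (forall i j, A i j -> (j <= i)%N)].

(* A^v = [A 0; v 1] : the last index is ord_max of 'I_n.+1. *)
Definition ext_mx (n : nat) (A : 'M[bool]_n) (v : 'rV[bool]_n) : 'M[bool]_n.+1 :=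
  \matrix_(i, j)
    match unlift ord_max i, unlift ord_max j with
    | Some i', Some j' => A i' j'
    | Some _, None => false
    | None, Some j' => v ord0 j'
    | None, None => true
    end.

Definition is_poset_vector (n : nat) (A : 'M[bool]_n) (v : 'rV[bool]_n) : Prop :=
  is_poset_matrix (ext_mx A v).

Definition bool_row_sum (n : nat) (A : 'M[bool]_n) (S : {set 'I_n}) : 'rV[bool]_n :=
  \row_j \big[orb/false]_(i in S) A i j.

Definition principal_is_identity (n : nat) (A : 'M[bool]_n) (S : {set 'I_n}) : Prop :=
  forall i j, i \in S -> j \in S -> A i j = (i == j).

(* Main.v *)
Require Import Defs.
From mathcomp Require Import all_boot all_algebra.

Section Aux.
Variables (n : nat) (A : 'M[bool]_n) (v : 'rV[bool]_n).

Lemma extLL i j : ext_mx A v (lift ord_max i) (lift ord_max j) = A i j.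
Proof. by rewrite mxE !liftK. Qed.
Lemma extLM i : ext_mx A v (lift ord_max i) ord_max = false.
Proof. by rewrite mxE liftK unlift_none. Qed.
Lemma extML j : ext_mx A v ord_max (lift ord_max j) = v ord0 j.
Proof. by rewrite mxE liftK unlift_none. Qed.
Lemma extMM : ext_mx A v ord_max ord_max = true.
Proof. by rewrite mxE unlift_none. Qed.

Lemma liftM (i : 'I_n) : nat_of_ord (lift ord_max i) = i.
Proof. by rewrite /= /bump leqNgt ltn_ord. Qed.

Lemma pv_iff : is_poset_matrix A ->
  (is_poset_vector A v <-> forall j k, v ord0 j -> A j k -> v ord0 k).
Proof.
case=> Hr Ha Ht Hn; split.
  case=> _ _ Et _ j k Hj Hk.
  have := Et ord_max (lift ord_max j) (lift ord_max k).
  by rewrite !extML extLL; apply.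
move=> Hd; split.
- by move=> i; case: (unliftP ord_max i) => [i'|] ->; rewrite ?extLL ?extMM.
- move=> i j; case: (unliftP ord_max i) => [i'|] ->; case: (unliftP ord_max j) => [j'|] ->;
    rewrite ?extLL ?extMM ?extLM ?extML //.
  by move=> H1 H2; rewrite (Ha _ _ H1 H2).
- move=> i j k; case: (unliftP ord_max i) => [i'|] ->; case: (unliftP ord_max j) => [j'|] ->;
    case: (unliftP ord_max k) => [k'|] ->;
    rewrite ?extLL ?extMM ?extLM ?extML //; eauto.
- move=> i j; case: (unliftP ord_max i) => [i'|] ->; case: (unliftP ord_max j) => [j'|] ->;
    rewrite ?extLL ?extMM ?extLM ?extML ?liftM //; eauto.
Qed.
End Aux.

Theorem theorem2p2 (n : nat) (A : 'M[bool]_n) (v : 'rV[bool]_n) :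
  is_poset_matrix A ->
  (is_poset_vector A v <->
   exists S : {set 'I_n}, principal_is_identity A S /\ v = bool_row_sum A S).
Proof.
move=> PA; apply: (iff_trans (@pv_iff n A v PA)); case: PA => Hr Ha Ht Hn; split; last first.
  case=> S [_ ->] j k; rewrite !mxE !big_orE => /existsP[i /andP[iS Aij]] Ajk.
  by apply/existsP; exists i; rewrite iS (Ht _ _ _ Aij Ajk).
move=> Hd.
exists [set j | v ord0 j && [forall i, (v ord0 i && A i j) ==> (i == j)]].
split.
  move=> i j; rewrite !inE => /andP[vi /forallP Mi] /andP[vj /forallP Mj].
  case: eqP => [-> |ne]; first by rewrite Hr.
  apply/negP => Aij.
  have := Mj i; rewrite vi Aij /= => /eqP; exact: ne.
apply/rowP => k; rewrite mxE big_orE.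
apply/idP/existsP.
  move=> vk.
  have Pk : v ord0 k && A k k by rewrite vk Hr.
  case: (@arg_maxnP _ k (fun i => v ord0 i && A i k) val Pk) => i /andP[vi Aik] Hmax.
  exists i; rewrite Aik andbT inE vi /=; apply/forallP => i'.
  apply/implyP => /andP[vi' Ai'i].
  have Ai'k := Ht _ _ _ Ai'i Aik.
  have le1 := Hmax i' (introT andP (conj vi' Ai'k)).
  have le2 := Hn _ _ Ai'i.
  by apply/eqP/val_inj/eqP; rewrite eqn_leq le2 andbT; exact: le1.
case=> i /andP[]; rewrite inE => /andP[vi _] Aik; exact: Hd vi Aik.
Qed.
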